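(* Let $\Sigma$ be a language consisting only of $0$-ary predicate symbols, unary predicate symbols and constant symbols, and let $\mathcal{T}_\Sigma$ be the family of all complete theories in $\Sigma$. If $\Sigma$ consists of finitely many symbols, then ${\rm RS}(\mathcal{T}_\Sigma)$ is finite (a natural number). If $\Sigma$ has infinitely many symbols, then ${\rm RS}(\mathcal{T}_\Sigma)=\infty$.
   Context: Theories are complete consistent first-order theories; structures have nonempty universes. $\mathcal{T}_\Sigma$ is the family of complete theories of all $\Sigma$-structures, where each constant symbol $c$ may be regarded as a unary predicate $R_c$ interpreted as $\{c\}$. For a family $\mathcal{T}$ of theories and a sentence $\varphi$ of its language, $\mathcal{T}_\varphi=\{T\in\mathcal{T}\mid\varphi\in T\}$. The rank ${\rm RS}$ of a family is defined as follows: ${\rm RS}(\emptyset)=-1$; ${\rm RS}(\mathcal{T})=0$ for finite nonempty $\mathcal{T}$; ${\rm RS}(\mathcal{T})\ge 1$ for infinite $\mathcal{T}$; for $\alpha=\beta+1$, ${\rm RS}(\mathcal{T})\ge\alpha$ iff there are pairwise inconsistent sentences $\varphi_n$, $n\in\omega$, of the language of $\mathcal{T}$ with ${\rm RS}(\mathcal{T}_{\varphi_n})\ge\beta$ for all $n$; for limit $\alpha$, ${\rm RS}(\mathcal{T})\ge\alpha$ iff ${\rm RS}(\mathcal{T})\ge\beta$ for all $\beta<\alpha$; ${\rm RS}(\mathcal{T})=\alpha$ iff ${\rm RS}(\mathcal{T})\ge\alpha$ and not ${\rm RS}(\mathcal{T})\ge\alpha+1$; ${\rm RS}(\mathcal{T})=\infty$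 if ${\rm RS}(\mathcal{T})\ge\alpha$ for every ordinal $\alpha$. *)

(* Defs.v *)
(* First-order logic (with equality) over a language Sigma
   consisting of 0-ary predicate symbols (indexed by P0), unary predicate
   symbols (indexed by P1) and constant symbols (indexed by C). *)
From Stdlib Require Import List.
Import ListNotations.

Set Implicit Arguments.

Inductive term (C : Type) : Type :=
| tvar : nat -> term C
| tconst : C -> term C.

Inductive form (P0 P1 C : Type) : Type :=
| fbot : form P0 P1 C
| feq : term C -> term C -> form P0 P1 C
| fp0 : P0 -> form P0 P1 C
| fp1 : P1 -> term C -> form P0 P1 C
| fimp : form P0 P1 C -> form P0 P1 C -> form P0 P1 C
| fall : nat -> form P0 P1 C -> form P0 P1 C.

Arguments tvar {C} _.
Arguments fbot {P0 P1 C}.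
Arguments feq {P0 P1 C} _ _.
Arguments fp0 {P0 P1 C} _.
Arguments fp1 {P0 P1 C} _ _.
Arguments fimp {P0 P1 C} _ _.
Arguments fall {P0 P1 C} _ _.
Arguments tconst {C} _.

Definition term_has_var {C : Type} (x : nat) (t : term C) : Prop :=
  match t with tvar y => x = y | tconst _ => False end.

Fixpoint occurs_free {P0 P1 C : Type} (x : nat) (phi : form P0 P1 C) : Prop :=
  match phi with
  | fbot => False
  | feq t1 t2 => term_has_var x t1 \/ term_has_var x t2
  | fp0 _ => False
  | fp1 _ t => term_has_var x t
  | fimp a b => occurs_free x a \/ occurs_free x b
  | fall y a => x <> y /\ occurs_free x a
  end.

Definition sentence {P0 P1 C : Type} (phi : form P0 P1 C) : Prop :=
  forall x, ~ occurs_free x phi.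

Record structure (P0 P1 C : Type) : Type := {
  carrier : Type;
  point : carrier;                       (* the universe is nonempty *)
  interp0 : P0 -> Prop;
  interp1 : P1 -> carrier -> Prop;
  interpc : C -> carrier }.

Definition eval_term {P0 P1 C : Type} (M : structure P0 P1 C)
  (v : nat -> carrier M) (t : term C) : carrier M :=
  match t with tvar n => v n | tconst c => interpc M c end.

Definition upd {A : Type} (v : nat -> A) (x : nat) (a : A) : nat -> A :=
  fun y => if Nat.eqb y x then a else v y.

Fixpoint sat {P0 P1 C : Type} (M : structure P0 P1 C)
  (v : nat -> carrier M) (phi : form P0 P1 C) : Prop :=
  match phi with
  | fbot => False
  | feq t1 t2 => eval_term M v t1 = eval_term M v t2
  | fp0 p => interp0 M p
  | fp1 p t => interp1 M p (eval_term M v t)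
  | fimp a b => sat M v a -> sat M v b
  | fall x a => forall m : carrier M, sat M (upd v x m) a
  end.

Definition models {P0 P1 C : Type} (M : structure P0 P1 C) (phi : form P0 P1 C) : Prop :=
  forall v : nat -> carrier M, sat M v phi.

Definition theory (P0 P1 C : Type) : Type := form P0 P1 C -> Prop.
Definition family (P0 P1 C : Type) : Type := theory P0 P1 C -> Prop.

Definition Th {P0 P1 C : Type} (M : structure P0 P1 C) : theory P0 P1 C :=
  fun phi => sentence phi /\ models M phi.

Definition TSigma (P0 P1 C : Type) : family P0 P1 C :=
  fun T => exists M : structure P0 P1 C, forall phi, T phi <-> Th M phi.
Arguments TSigma : clear implicits.

Definition restrict {P0 P1 C : Type} (F : family P0 P1 C) (phi : form P0 P1 C)
  : family P0 P1 C := fun T => F T /\ T phi.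

Definition same_theory {P0 P1 C : Type} (T1 T2 : theory P0 P1 C) : Prop :=
  forall phi, T1 phi <-> T2 phi.

Definition fam_nonempty {P0 P1 C : Type} (F : family P0 P1 C) : Prop :=
  exists T, F T.

Definition fam_finite {P0 P1 C : Type} (F : family P0 P1 C) : Prop :=
  exists l : list (theory P0 P1 C),
    forall T, F T -> exists T', In T' l /\ same_theory T T'.

Definition fam_infinite {P0 P1 C : Type} (F : family P0 P1 C) : Prop :=
  ~ fam_finite F.

Definition inconsistent2 {P0 P1 C : Type} (phi psi : form P0 P1 C) : Prop :=
  ~ exists M : structure P0 P1 C, models M phi /\ models M psi.

(** ** Ordinals: Brouwer trees with arbitrary (type-indexed) suprema.
    Every ordinal is denoted by such a tree; [OL I f] denotes sup_{i:I} f i. *)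
Inductive Ord : Type :=
| OZ : Ord
| OS : Ord -> Ord
| OL : forall I : Type, (I -> Ord) -> Ord.
Arguments OL : clear implicits.

Fixpoint isZero (a : Ord) : Prop :=
  match a with
  | OZ => True
  | OS _ => False
  | OL J f => forall i, isZero (f i)
  end.

Fixpoint ord_of_nat (n : nat) : Ord :=
  match n with O => OZ | S k => OS (ord_of_nat k) end.

(** ** The rank RS.  [RSge a F] means RS(F) >= a.
    - RS(F) >= 0 iff F is nonempty (RS(empty) = -1, finite nonempty -> 0);
    - RS(F) >= 1 if F is infinite;
    - RS(F) >= b+1 iff there are pairwise inconsistent sentences phi_n with
      RS(F_{phi_n}) >= b for all n;
    - for a supremum (limit) a, RS(F) >= a iff RS(F) >= b for all b below a. *)
Fixpoint RSge {P0 P1 C : Type} (a : Ord) (F : family P0 P1 C) : Prop :=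
  match a with
  | OZ => fam_nonempty F
  | OS b =>
      (isZero b /\ fam_infinite F) \/
      exists phi : nat -> form P0 P1 C,
        (forall n, sentence (phi n)) /\
        (forall n m, n <> m -> inconsistent2 (phi n) (phi m)) /\
        (forall n, RSge b (restrict F (phi n)))
  | OL J f => fam_nonempty F /\ forall i, RSge (f i) F
  end.

Definition RS_eq {P0 P1 C : Type} (a : Ord) (F : family P0 P1 C) : Prop :=
  RSge a F /\ ~ RSge (OS a) F.

Definition RS_infty {P0 P1 C : Type} (F : family P0 P1 C) : Prop :=
  forall a : Ord, RSge a F.

Definition fin_type (A : Type) : Prop := exists l : list A, forall x : A, In x l.

(* Main.v *)
Require Import Defs.
From Stdlib Require Import List Arith Lia Classical ClassicalEpsilon.
Import ListNotations.

Section EF.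
Variables P0 P1 C : Type.
Notation St := (structure P0 P1 C).
Notation Fm := (form P0 P1 C).

Definition incell (X : St) (tau : P1 -> bool) (m : carrier X) : Prop :=
  forall p, interp1 X p m <-> tau p = true.

Definition AL (X : St) (a : list (carrier X)) (tau : P1 -> bool) (j : nat) : Prop :=
  exists l : list (carrier X), length l = j /\ NoDup l /\
    forall m, In m l -> incell X tau m /\ (forall c, m <> interpc X c) /\ ~ In m a.

Definition valn (X : St) (a : list (carrier X)) (n : C + nat) : carrier X :=
  match n with inl c => interpc X c | inr i => nth i a (point X) end.

Definition valid {A : Type} (a : list A) (n : C + nat) : Prop :=
  match n with inl _ => True | inr i => i < length a end.

Definition Rel (M N : St) (a : list (carrier M)) (b : list (carrier N)) (q : nat) : Prop :=
  length a = length b /\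
  (forall p, interp0 M p <-> interp0 N p) /\
  (forall n1 n2, valid a n1 -> valid a n2 ->
     (valn M a n1 = valn M a n2 <-> valn N b n1 = valn N b n2)) /\
  (forall p n, valid a n -> (interp1 M p (valn M a n) <-> interp1 N p (valn N b n))) /\
  (forall tau j, j <= q -> (AL M a tau j <-> AL N b tau j)).

Lemma valid_len {A B : Type} (a : list A) (b : list B) n :
  length a = length b -> valid a n -> valid b n.
Proof. destruct n; simpl; intros; auto; lia. Qed.

Lemma Rel_sym M N a b q : Rel M N a b q -> Rel N M b a q.
Proof.
  intros [Hl [H0 [He [H1 Hc]]]]. repeat split.
  - auto.
  - apply H0. - apply H0.
  - intros. apply He; eauto using valid_len.
  - intros. apply He; eauto using valid_len.
  - intros. apply H1; eauto using valid_len.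
  - intros. apply H1; eauto using valid_len.
  - intros. apply Hc; auto.
  - intros. apply Hc; auto.
Qed.

Lemma Rel_mono M N a b q q' : q' <= q -> Rel M N a b q -> Rel M N a b q'.
Proof.
  intros Hq [Hl [H0 [He [H1 Hc]]]]. split; [auto|split; [auto|split; [auto|split; [auto|]]]].
  intros; apply Hc; lia.
Qed.

Lemma AL_down X a tau j j' : j' <= j -> AL X a tau j -> AL X a tau j'.
Proof.
  intros Hj [l [Hl [Hn Hm]]]. exists (firstn j' l).
  pose proof (firstn_skipn j' l) as Hs.
  split; [|split].
  - apply firstn_length_le. lia.
  - rewrite <- Hs in Hn. eapply NoDup_app_remove_r; eauto.
  - intros z Hin. apply Hm. rewrite <- Hs. apply in_or_app; auto.
Qed.

Lemma AL_ext X a tau tau' j : (forall p, tau p = tau' p) -> AL X a tau j -> AL X a tau' j.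
Proof.
  intros He [l [Hl [Hn Hm]]]. exists l. split; [auto|split; [auto|]].
  intros z Hz. destruct (Hm z Hz) as [H1 [H2 H3]]. split; [|auto].
  intro p. rewrite <- He. apply H1.
Qed.

Lemma drop_one {A : Type} (x : A) (l : list A) j :
  NoDup l -> length l = S j ->
  exists l', NoDup l' /\ length l' = j /\ forall z, In z l' -> In z l /\ z <> x.
Proof.
  intros Hn Hl. destruct (classic (In x l)) as [Hi|Hi].
  - destruct (in_split _ _ Hi) as [l1 [l2 E]]. subst l.
    exists (l1 ++ l2). pose proof (NoDup_remove _ _ _ Hn) as [Hn' Hx].
    split; [auto|split].
    + rewrite length_app in *. simpl in Hl. lia.
    + intros z Hz. split.
      * apply in_app_or in Hz. apply in_or_app. destruct Hz; [left|right; right]; auto.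
      * intro E. subst. contradiction.
  - destruct l as [|y l]; [discriminate|]. exists l. inversion Hn; subst.
    split; [auto|split; [auto|]]. intros z Hz. split; [right; auto|].
    intro E; subst. apply Hi. right; auto.
Qed.

Lemma AL_add_in X a tau x j :
  incell X tau x -> ~ In x a -> (forall c, x <> interpc X c) ->
  (AL X (x :: a) tau j <-> AL X a tau (S j)).
Proof.
  intros Hx Ha Hc. split.
  - intros [l [Hl [Hn Hm]]]. exists (x :: l). split; [|split].
    + simpl; lia.
    + constructor; auto. intro Hi. apply (Hm x Hi). left; auto.
    + intros m [E|Hi]; [subst; auto|].
      destruct (Hm m Hi) as [H1 [H2 H3]]. split; [auto|split; [auto|]].
      intro Hq. apply H3. right; auto.
  - intros [l [Hl [Hn Hm]]]. destruct (drop_one x l j Hn Hl) as [l' [Hn' [Hl' Hz]]].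
    exists l'. split; [auto|split; [auto|]].
    intros m Hi. destruct (Hz m Hi) as [Hi1 Hne]. destruct (Hm m Hi1) as [H1 [H2 H3]].
    split; [auto|split; [auto|]]. intros [E|Hq]; [congruence|auto].
Qed.

Lemma AL_add_out X a tau x j :
  ~ incell X tau x -> (AL X (x :: a) tau j <-> AL X a tau j).
Proof.
  intros Hx. split.
  - intros [l [Hl [Hn Hm]]]. exists l. split; [auto|split; [auto|]].
    intros m Hi. destruct (Hm m Hi) as [H1 [H2 H3]]. split; [auto|split; [auto|]].
    intro Ha. apply H3. right; auto.
  - intros [l [Hl [Hn Hm]]]. exists l. split; [auto|split; [auto|]].
    intros m Hi. destruct (Hm m Hi) as [H1 [H2 H3]]. split; [auto|split; [auto|]].
    intros [E|Ha]. subst. apply Hx; auto. auto.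
Qed.

Definition dec (P : Prop) : bool := if excluded_middle_informative P then true else false.
Lemma dec_spec P : dec P = true <-> P.
Proof. unfold dec. destruct (excluded_middle_informative P); split; auto; discriminate. Qed.

Definition shiftn (n0 : C + nat) (n : C + nat) : C + nat :=
  match n with inl c => inl c | inr 0 => n0 | inr (S i) => inr i end.

Lemma shift_valid {A : Type} (x : A) a n0 n : valid a n0 -> valid (x :: a) n -> valid a (shiftn n0 n).
Proof. destruct n as [c|[|i]]; simpl; auto. lia. Qed.

Lemma shift_val X a x n0 n : x = valn X a n0 -> valn X (x :: a) n = valn X a (shiftn n0 n).
Proof. destruct n as [c|[|i]]; simpl; auto. Qed.

Lemma ext_lemma M N a b q : Rel M N a b (S q) -> forall m, exists m', Rel M N (m :: a) (m' :: b) q.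
Proof.
  intros HR m. pose proof HR as [Hl [H0 [He [H1 Hc]]]].
  destruct (classic (exists n0, valid a n0 /\ m = valn M a n0)) as [[n0 [Hv Em]]|Hno].
  - exists (valn N b n0).
    assert (Hv' : forall n, valid (m :: a) n -> valid a (shiftn n0 n)) by (intros; eapply shift_valid; eauto).
    assert (EM : forall n, valn M (m :: a) n = valn M a (shiftn n0 n)) by (intros; apply shift_val; auto).
    assert (EN : forall n, valn N (valn N b n0 :: b) n = valn N b (shiftn n0 n)) by (intros; apply shift_val; auto).
    assert (HAM : forall tau j, AL M (m :: a) tau j <-> AL M a tau j).
    { intros tau j. split.
      - intros [l [Hl' [Hn Hm]]]. exists l. split; [auto|split; [auto|]].
        intros z Hi. destruct (Hm z Hi) as [Q1 [Q2 Q3]]. split; [auto|split; [auto|]].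
        intro Ha. apply Q3. right; auto.
      - intros [l [Hl' [Hn Hm]]]. exists l. split; [auto|split; [auto|]].
        intros z Hi. destruct (Hm z Hi) as [Q1 [Q2 Q3]]. split; [auto|split; [auto|]].
        intros [E|Ha]; [|auto]. subst z.
        destruct n0 as [c|i]; simpl in *.
        + apply (Q2 c); auto.
        + apply Q3. try rewrite Em. apply nth_In; auto. }
    assert (HAN : forall tau j, AL N (valn N b n0 :: b) tau j <-> AL N b tau j).
    { assert (Hv0 : valid b n0) by (eapply valid_len; eauto).
      intros tau j. split.
      - intros [l [Hl' [Hn Hm]]]. exists l. split; [auto|split; [auto|]].
        intros z Hi. destruct (Hm z Hi) as [Q1 [Q2 Q3]]. split; [auto|split; [auto|]].
        intro Ha. apply Q3. right; auto.
      - intros [l [Hl' [Hn Hm]]]. exists l. split; [auto|split; [auto|]].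
        intros z Hi. destruct (Hm z Hi) as [Q1 [Q2 Q3]]. split; [auto|split; [auto|]].
        intros [E|Ha]; [|auto]. subst z.
        destruct n0 as [c|i]; simpl in *.
        + apply (Q2 c); auto.
        + apply Q3. try rewrite Em. apply nth_In; auto. }
    split; [simpl; lia|split; [exact H0|split; [|split]]].
    + intros. rewrite EM, EM, EN, EN in *. apply He; auto.
    + intros. rewrite EM, EN in *. apply H1; auto.
    + intros. rewrite HAM, HAN in *. apply Hc; auto.
  - set (tau := fun p => dec (interp1 M p m)).
    assert (Hm : incell M tau m) by (intro p; unfold tau; rewrite dec_spec; tauto).
    assert (Hma : ~ In m a).
    { intro Hi. apply Hno. destruct (In_nth _ _ (point M) Hi) as [i [Hi' E]].
      exists (inr i). simpl; auto. }
    assert (Hmc : forall c, m <> interpc M c).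
    { intros c E. apply Hno. exists (inl c). simpl; auto. }
    assert (HA1 : AL M a tau 1).
    { exists [m]. split; [auto|split].
      - constructor; auto. constructor.
      - intros z [E|[]]; subst; auto. }
    apply Hc in HA1; [|lia].
    destruct HA1 as [[|m' [|]] [HL [_ Hm']]]; try discriminate.
    destruct (Hm' m' (or_introl eq_refl)) as [Hcell' [Hmc' Hmb']].
    exists m'.
    assert (Hold : forall n, valid (m :: a) n -> n <> inr 0 ->
              valid a (shiftn (inr 0) n) /\ valn M (m :: a) n = valn M a (shiftn (inr 0) n)
              /\ valn N (m' :: b) n = valn N b (shiftn (inr 0) n)).
    { intros [c|[|i]] Hv Hn; simpl in *; try congruence; repeat split; auto; lia. }
    assert (HnewM : forall n, valid a n -> m <> valn M a n) by (intros n Hv E; apply Hno; eauto).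
    assert (HnewN : forall n, valid b n -> m' <> valn N b n).
    { intros [c|i] Hv E; simpl in *. apply (Hmc' c); auto. apply Hmb'. subst. apply nth_In; auto. }
    assert (Hsame : forall p, interp1 M p m <-> interp1 N p m').
    { intro p. rewrite (Hm p), (Hcell' p). tauto. }
    split; [simpl; lia|split; [exact H0|split; [|split]]].
    + intros n1 n2 Hv1 Hv2.
      destruct (classic (n1 = inr 0)) as [E1|E1]; destruct (classic (n2 = inr 0)) as [E2|E2];
        try (subst; simpl; tauto).
      * subst n1. destruct (Hold n2 Hv2 E2) as [Hv [EM EN]]. rewrite EM, EN. simpl.
        split; intro E; exfalso; [eapply HnewM; eauto|eapply HnewN; eauto; eapply valid_len; eauto].
      * subst n2. destruct (Hold n1 Hv1 E1) as [Hv [EM EN]]. rewrite EM, EN. simpl.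
        split; intro E; exfalso; [eapply HnewM; eauto|eapply HnewN; eauto; eapply valid_len; eauto].
      * destruct (Hold n1 Hv1 E1) as [Hva [EM EN]]. destruct (Hold n2 Hv2 E2) as [Hvb [EM' EN']].
        rewrite EM, EN, EM', EN'. apply He; auto.
    + intros p n Hv. destruct (classic (n = inr 0)) as [E|E].
      * subst. simpl. apply Hsame.
      * destruct (Hold n Hv E) as [Hva [EM EN]]. rewrite EM, EN. apply H1; auto.
    + intros tau' j Hj. destruct (classic (incell M tau' m)) as [Hin|Hout].
      * assert (Hin' : incell N tau' m') by (intro p; rewrite <- Hsame; apply Hin).
        rewrite (AL_add_in _ _ _ _ _ Hin Hma Hmc).
        rewrite (AL_add_in _ _ _ _ _ Hin' Hmb' Hmc').
        apply Hc. lia.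
      * assert (Hout' : ~ incell N tau' m') by (intro Hx; apply Hout; intro p; rewrite Hsame; apply Hx).
        rewrite (AL_add_out _ _ _ _ _ Hout), (AL_add_out _ _ _ _ _ Hout'). apply Hc; lia.
Qed.


Fixpoint qd (phi : Fm) : nat :=
  match phi with
  | fimp a b => Nat.max (qd a) (qd b)
  | fall _ a => S (qd a)
  | _ => 0
  end.

Definition Corr (V : list nat) (M N : St) (v : nat -> carrier M) (w : nat -> carrier N)
  (a : list (carrier M)) (b : list (carrier N)) : Prop :=
  forall y, In y V -> exists i, i < length a /\ v y = nth i a (point M) /\ w y = nth i b (point N).

Lemma term_name V M N v w a b (t : term C) :
  (forall x, term_has_var x t -> In x V) -> Corr V M N v w a b ->
  exists n, valid a n /\ eval_term M v t = valn M a n /\ eval_term N w t = valn N b n.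
Proof.
  intros Ht HC. destruct t as [y|c]; simpl in *.
  - destruct (HC y (Ht y eq_refl)) as [i [Hi [E1 E2]]]. exists (inr i). simpl; auto.
  - exists (inl c). simpl; auto.
Qed.

Lemma sat_iff (phi : Fm) : forall V M N a b v w q,
  (forall x, occurs_free x phi -> In x V) -> qd phi <= q -> Rel M N a b q ->
  Corr V M N v w a b -> (sat M v phi <-> sat N w phi).
Proof.
  induction phi as [| t1 t2 | p | p t | f1 IH1 f2 IH2 | x f IH]; intros V M N a b v w q Hfv Hq HR HC;
    simpl in *.
  - tauto.
  - destruct (term_name V M N v w a b t1) as [n1 [Hv1 [E1 E1']]]; auto.
    destruct (term_name V M N v w a b t2) as [n2 [Hv2 [E2 E2']]]; auto.
    rewrite E1, E1', E2, E2'. apply HR; auto.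
  - apply HR.
  - destruct (term_name V M N v w a b t) as [n1 [Hv1 [E1 E1']]]; auto.
    rewrite E1, E1'. apply HR; auto.
  - rewrite (IH1 V M N a b v w q), (IH2 V M N a b v w q); auto; try tauto; lia.
  - destruct q as [|q]; [lia|].
    assert (Hfv' : forall y, occurs_free y f -> In y (x :: V)).
    { intros y Hy. destruct (Nat.eq_dec y x); [left; auto|right; apply Hfv; auto]. }
    assert (HC' : forall m m', Corr (x :: V) M N (upd v x m) (upd w x m') (m :: a) (m' :: b)).
    { intros m m' y [E|Hy].
      - subst. exists 0. simpl. unfold upd. rewrite Nat.eqb_refl. repeat split; auto; lia.
      - destruct (Nat.eq_dec y x) as [E|Ne].
        + subst. exists 0. simpl. unfold upd. rewrite Nat.eqb_refl. repeat split; auto; lia.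
        + destruct (HC y Hy) as [i [Hi [E1 E2]]]. exists (S i). simpl. unfold upd.
          apply Nat.eqb_neq in Ne. rewrite Ne. repeat split; auto; lia. }
    split.
    + intros H m'. destruct (ext_lemma N M b a q (Rel_sym _ _ _ _ _ HR) m') as [m HR'].
      apply Rel_sym in HR'.
      apply (IH (x :: V) M N (m :: a) (m' :: b) (upd v x m) (upd w x m') q); auto; lia.
    + intros H m. destruct (ext_lemma M N a b q HR m) as [m' HR'].
      apply (IH (x :: V) M N (m :: a) (m' :: b) (upd v x m) (upd w x m') q); auto; lia.
Qed.

Lemma models_iff M N q (phi : Fm) : sentence phi -> qd phi <= q -> Rel M N [] [] q ->
  (models M phi <-> models N phi).
Proof.
  intros Hs Hq HR. unfold models.
  assert (HC : forall v w, Corr [] M N v w [] []) by (intros v w y []).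
  split; intros H v.
  - apply (sat_iff phi [] M N [] [] (fun _ => point M) v q); auto;
    intros y Hy; exfalso; apply (Hs y Hy).
  - apply (sat_iff phi [] M N [] [] v (fun _ => point N) q); auto;
    intros y Hy; exfalso; apply (Hs y Hy).
Qed.

End EF.

Arguments incell {P0 P1 C}. Arguments AL {P0 P1 C}. Arguments valn {P0 P1 C}.
Arguments valid {C A}. Arguments Rel {P0 P1 C}. Arguments qd {P0 P1 C}.
Arguments Rel_mono {P0 P1 C}. Arguments AL_down {P0 P1 C}. Arguments AL_ext {P0 P1 C}.
Arguments models_iff {P0 P1 C}.

Lemma dec_eq_iff P Q : dec P = dec Q -> (P <-> Q).
Proof.
  intro E. split; intro H.
  - apply dec_spec. rewrite <- E. apply dec_spec; auto.
  - apply dec_spec. rewrite E. apply dec_spec; auto.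
Qed.

Definition b2n (b : bool) : nat := if b then 1 else 0.
Lemma b2n_inj b b' : b2n b = b2n b' -> b = b'.
Proof. destruct b, b'; simpl; congruence. Qed.

Lemma app_split {A : Type} (l1 l2 l1' l2' : list A) :
  l1 ++ l2 = l1' ++ l2' -> length l1 = length l1' -> l1 = l1' /\ l2 = l2'.
Proof.
  revert l1'. induction l1 as [|x l1 IH]; intros [|y l1'] E HL; simpl in *; try discriminate; auto.
  inversion E; subst. destruct (IH l1' H1) as [E1 E2]; auto. subst; auto.
Qed.

Lemma NoDup_map_inj {A B : Type} (f : A -> B) l :
  (forall x y, f x = f y -> x = y) -> NoDup l -> NoDup (map f l).
Proof.
  intros Hf Hn. induction Hn; simpl; constructor; auto.
  intro Hi. apply in_map_iff in Hi. destruct Hi as [y [E Hy]]. apply Hf in E. subst; auto.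
Qed.

Section Fin.
Variables P0 P1 C : Type.
Notation St := (structure P0 P1 C).
Notation Fm := (form P0 P1 C).

Definition inf (M : St) tau := forall j, AL M [] tau j.
Definition good q (M : St) := forall tau, ~ inf M tau -> ~ AL M [] tau q.

Fixpoint cnt (M : St) tau q : nat :=
  match q with 0 => 0 | S q' => if dec (AL M [] tau (S q')) then S q' else cnt M tau q' end.

Lemma AL0 (M : St) a tau : AL M a tau 0.
Proof. exists []. split; [auto|split; [constructor|]]. intros m []. Qed.

Lemma cnt_le M tau q : cnt M tau q <= q.
Proof. induction q; simpl; auto. destruct (dec _); lia. Qed.

Lemma cnt_spec M tau q j : j <= q -> (j <= cnt M tau q <-> AL M [] tau j).
Proof.
  induction q; intros Hj; simpl.
  - assert (j = 0) by lia. subst. split; auto using AL0.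
  - destruct (dec (AL M [] tau (S q))) eqn:E.
    + apply (proj1 (dec_spec _)) in E. split; intros _; [|lia]. apply (AL_down _ _ _ (S q)); [exact Hj|exact E].
    + assert (Hn : ~ AL M [] tau (S q)) by (intro H; apply (proj2 (dec_spec _)) in H; congruence).
      destruct (Nat.eq_dec j (S q)).
      * subst. pose proof (cnt_le M tau q). split; intro HH; [lia|contradiction].
      * apply IHq. lia.
Qed.

Definition bump (M : St) (tau : P1 -> bool) : St :=
  {| carrier := (carrier M + nat)%type; point := inl (point M); interp0 := interp0 M;
     interp1 := fun p x => match x with inl m => interp1 M p m | inr _ => tau p = true end;
     interpc := fun c => inl (interpc M c) |}.

Lemma AL_bump_up M tau tau' j : AL M [] tau' j -> AL (bump M tau) [] tau' j.
Proof.
  intros [l [Hl [Hn Hm]]]. exists (map inl l). split; [|split].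
  - rewrite length_map; auto.
  - apply NoDup_map_inj; auto. intros x y E; inversion E; auto.
  - intros z Hz. apply in_map_iff in Hz. destruct Hz as [m [E Hi]]. subst.
    destruct (Hm m Hi) as [H1 [H2 H3]]. split; [exact H1|split; [|intros []]].
    intros c E. inversion E. apply (H2 c); auto.
Qed.

Lemma AL_bump_down M tau tau' j : (exists p, tau' p <> tau p) ->
  AL (bump M tau) [] tau' j -> AL M [] tau' j.
Proof.
  intros [p0 Hp0] [l [Hl [Hn Hm]]].
  set (unl := fun x : carrier (bump M tau) => match x with inl m => m | inr _ => point M end).
  assert (E : map inl (map unl l) = l).
  { rewrite map_map. rewrite <- (map_id l) at 2. apply map_ext_in.
    intros [m|k] Hi; simpl; auto. exfalso. destruct (Hm _ Hi) as [H1 _].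
    apply Hp0. specialize (H1 p0). simpl in H1. destruct (tau' p0), (tau p0); intuition. }
  exists (map unl l). split; [|split].
  - rewrite length_map; auto.
  - apply (NoDup_map_inv (@inl (carrier M) nat)). rewrite E; auto.
  - intros m Hi. assert (Hi' : In (inl m) l).
    { rewrite <- E. apply in_map; auto. }
    destruct (Hm _ Hi') as [H1 [H2 H3]]. split; [exact H1|split; [|intros []]].
    intros c Ec. apply (H2 c). simpl. rewrite Ec; auto.
Qed.

Lemma inf_bump M tau : inf (bump M tau) tau.
Proof.
  intro j. exists (map (fun k => @inr (carrier M) nat k) (seq 0 j)). split; [|split].
  - rewrite length_map, length_seq; auto.
  - apply NoDup_map_inj. intros x y E; inversion E; auto. apply seq_NoDup.
  - intros z Hz. apply in_map_iff in Hz. destruct Hz as [k [E _]]. subst.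
    split; [intro p; simpl; tauto|split; [|intros []]]. intros c E; discriminate.
Qed.

Lemma Rel_bump M tau q : AL M [] tau q -> Rel M (bump M tau) [] [] q.
Proof.
  intro Hq. split; [auto|split; [intro; simpl; tauto|split; [|split]]].
  - intros [c1|i1] [c2|i2] Hv1 Hv2; simpl in *; try lia.
    split; intro E; [rewrite E; auto|inversion E; auto].
  - intros p [c|i] Hv; simpl in *; [tauto|lia].
  - intros tau' j Hj. split; [apply AL_bump_up|].
    destruct (classic (forall p, tau' p = tau p)) as [He|Hne].
    + intros _. apply (AL_ext _ _ tau); [intro p; rewrite He; auto|].
      apply (AL_down _ _ _ q); auto.
    + apply AL_bump_down. apply not_all_ex_not; auto.
Qed.


Variables (l0 : list P0) (l1 : list P1) (lc : list C).
Hypotheses (cov0 : forall p, In p l0) (cov1 : forall p, In p l1) (covc : forall c, In c lc).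

Definition deq1 (x y : P1) := excluded_middle_informative (x = y).
Fixpoint allfuns (l : list P1) : list (P1 -> bool) :=
  match l with
  | [] => [fun _ => false]
  | p :: l' => flat_map (fun f => [fun x => if deq1 x p then true else f x;
                                 fun x => if deq1 x p then false else f x]) (allfuns l')
  end.

Lemma allfuns_spec l tau : exists f, In f (allfuns l) /\ forall x, In x l -> f x = tau x.
Proof.
  induction l as [|p l IH]; simpl.
  - exists (fun _ => false). split; auto. intros x [].
  - destruct IH as [f [Hf Hx]].
    exists (fun x => if deq1 x p then tau p else f x). split.
    + apply in_flat_map. exists f. split; auto. destruct (tau p); simpl; auto.
    + intros x Hin. destruct (deq1 x p) as [E|Ne]; [subst; auto|].
      apply Hx. destruct Hin; [congruence|auto].
Qed.

Definition cells := allfuns l1.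
Lemma cells_spec tau : exists f, In f cells /\ forall p, f p = tau p.
Proof. destruct (allfuns_spec l1 tau) as [f [H1 H2]]. exists f. split; auto. Qed.

Definition sig q (M : St) : list nat :=
  map (fun p => b2n (dec (interp0 M p))) l0 ++
  map (fun cd => b2n (dec (interpc M (fst cd) = interpc M (snd cd)))) (list_prod lc lc) ++
  map (fun pc => b2n (dec (interp1 M (fst pc) (interpc M (snd pc))))) (list_prod l1 lc) ++
  map (fun tau => cnt M tau q) cells.

Definition siglen := length l0 + length (list_prod lc lc) + length (list_prod l1 lc) + length cells.

Lemma sig_len q M : length (sig q M) = siglen.
Proof. unfold sig, siglen. rewrite !length_app, !length_map. lia. Qed.

Lemma sig_bound q M x : In x (sig q M) -> x <= S q.
Proof.
  unfold sig. intro H. repeat (apply in_app_or in H; destruct H as [H|H]);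
  apply in_map_iff in H; destruct H as [y [E _]]; subst;
  try (unfold b2n; destruct (dec _); lia).
  pose proof (cnt_le M y q). lia.
Qed.

Lemma sig_Rel q M N : good q M -> good q N -> sig q M = sig q N -> forall Q, Rel M N [] [] Q.
Proof.
  intros gM gN E Q. unfold sig in E.
  apply app_split in E; [|rewrite !length_map; auto]. destruct E as [E0 E].
  apply app_split in E; [|rewrite !length_map; auto]. destruct E as [Ec E].
  apply app_split in E; [|rewrite !length_map; auto]. destruct E as [E1 Et].
  pose proof (ext_in_map E0) as F0. pose proof (ext_in_map Ec) as Fc.
  pose proof (ext_in_map E1) as F1. pose proof (ext_in_map Et) as Ft.
  split; [auto|split; [|split; [|split]]].
  - intro p. apply dec_eq_iff. apply b2n_inj. apply (F0 p); auto.
  - intros [c1|i1] [c2|i2] Hv1 Hv2; simpl in *; try lia.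
    apply dec_eq_iff. apply b2n_inj. apply (Fc (c1, c2)). apply in_prod; auto.
  - intros p [c|i] Hv; simpl in *; try lia.
    apply dec_eq_iff. apply b2n_inj. apply (F1 (p, c)). apply in_prod; auto.
  - intros tau j _. destruct (cells_spec tau) as [t0 [Ht0 He]].
    assert (HM : forall j, AL M [] tau j <-> AL M [] t0 j).
    { intro j'. split; apply AL_ext; intro p; rewrite He; auto. }
    assert (HN : forall j, AL N [] tau j <-> AL N [] t0 j).
    { intro j'. split; apply AL_ext; intro p; rewrite He; auto. }
    rewrite HM, HN. pose proof (Ft t0 Ht0) as Ec0. simpl in Ec0.
    destruct (classic (AL M [] t0 q)) as [Hq|Hq].
    + assert (HqN : AL N [] t0 q).
      { apply (cnt_spec N t0 q q); auto. rewrite <- Ec0. apply (cnt_spec M t0 q q); auto. }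
      assert (iM : inf M t0) by (apply NNPP; intro Hn; apply (gM t0 Hn Hq)).
      assert (iN : inf N t0) by (apply NNPP; intro Hn; apply (gN t0 Hn HqN)).
      split; intros _; auto.
    + assert (HqN : ~ AL N [] t0 q).
      { intro HH. apply Hq. apply (cnt_spec M t0 q q); auto. rewrite Ec0. apply (cnt_spec N t0 q q); auto. }
      destruct (le_lt_dec j q) as [Hj|Hj].
      * rewrite <- (cnt_spec M t0 q j Hj), <- (cnt_spec N t0 q j Hj), Ec0. tauto.
      * split; intro HH; exfalso; [apply Hq|apply HqN]; apply (AL_down _ _ _ j); auto; lia.
Qed.


Fixpoint lists (L B : nat) : list (list nat) :=
  match L with
  | 0 => [[]]
  | S L' => flat_map (fun x => map (cons x) (lists L' B)) (seq 0 (S B))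
  end.

Lemma lists_spec B s : (forall x, In x s -> x <= B) -> In s (lists (length s) B).
Proof.
  induction s as [|x s IH]; intros H; [simpl; auto|].
  change (In (x :: s) (flat_map (fun y => map (cons y) (lists (length s) B)) (seq 0 (S B)))).
  apply in_flat_map. exists x. split.
  - apply in_seq. specialize (H x (or_introl eq_refl)). lia.
  - apply in_map. apply IH. intros; apply H; right; auto.
Qed.

Definition Sigs q := lists siglen (S q).
Lemma sig_in q M : In (sig q M) (Sigs q).
Proof. unfold Sigs. rewrite <- (sig_len q M). apply lists_spec. apply sig_bound. Qed.

Definition extF (G : family P0 P1 C) := forall T T', same_theory T T' -> G T -> G T'.
Definition subT (G : family P0 P1 C) := forall T, G T -> TSigma P0 P1 C T.
Definition closedF q (G : family P0 P1 C) := forall M N, Rel M N [] [] q -> G (Th M) -> G (Th N).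
Definition Inv q G := extF G /\ subT G /\ closedF q G.

Lemma same_theory_sym (T T' : theory P0 P1 C) : same_theory T T' -> same_theory T' T.
Proof. intros H phi. rewrite (H phi). tauto. Qed.

Lemma G_Th q G T : Inv q G -> G T -> exists M, same_theory T (Th M) /\ G (Th M).
Proof.
  intros [He [Hs Hc]] HT. destruct (Hs T HT) as [M HM]. exists M. split; [exact HM|].
  apply (He T); auto.
Qed.

Lemma Rel_same (M N : St) : (forall Q, Rel M N [] [] Q) -> same_theory (Th M) (Th N).
Proof.
  intros HR phi. unfold Th. split; intros [Hs Hm]; split; auto.
  - apply (models_iff M N (qd phi)); auto.
  - apply (models_iff M N (qd phi)); auto.
Qed.

Definition big (M : St) := length (filter (fun tau => dec (inf M tau)) cells).

Lemma filter_mono {A} (f g : A -> bool) l :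
  (forall x, In x l -> f x = true -> g x = true) -> length (filter f l) <= length (filter g l).
Proof.
  induction l as [|y l IH]; intros H; simpl; auto.
  destruct (f y) eqn:Ef.
  - rewrite (H y (or_introl eq_refl) Ef). simpl. apply le_n_S. apply IH. intros; apply H; auto. right; auto.
  - destruct (g y); simpl; [apply le_S|]; apply IH; intros; apply H; auto; right; auto.
Qed.

Lemma filter_strict {A} (f g : A -> bool) l x0 :
  (forall x, In x l -> f x = true -> g x = true) -> In x0 l -> f x0 = false -> g x0 = true ->
  S (length (filter f l)) <= length (filter g l).
Proof.
  induction l as [|y l IH]; intros H Hin Hf Hg; simpl; [destruct Hin|].
  destruct Hin as [E|Hin].
  - subst. rewrite Hf, Hg. simpl. apply le_n_S. apply filter_mono. intros; apply H; auto. right; auto.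
  - destruct (f y) eqn:Ef.
    + rewrite (H y (or_introl eq_refl) Ef). simpl. apply le_n_S. apply IH; auto. intros; apply H; auto. right; auto.
    + destruct (g y); simpl; [apply le_S|]; apply IH; auto; intros; apply H; auto; right; auto.
Qed.

Lemma big_le M : big M <= length cells.
Proof. apply filter_length_le. Qed.

Lemma lemmaC q G M tau : Inv q G -> G (Th M) -> ~ inf M tau -> AL M [] tau q ->
  exists N, G (Th N) /\ S (big M) <= big N.
Proof.
  intros [He [Hs Hc]] HG Hni Hq. exists (bump M tau). split.
  - apply (Hc M); auto. apply Rel_bump; auto.
  - destruct (cells_spec tau) as [t0 [Ht0 Et]]. unfold big.
    apply (filter_strict _ _ _ t0); auto.
    + intros x _ Hx. apply (proj2 (dec_spec _)). apply (proj1 (dec_spec _)) in Hx. intro j. apply AL_bump_up. apply Hx.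
    + destruct (dec (inf M t0)) eqn:E; auto. apply (proj1 (dec_spec _)) in E. exfalso. apply Hni.
      intro j. apply (AL_ext _ _ t0); auto.
    + apply (proj2 (dec_spec _)). intro j. apply (AL_ext _ _ tau); [intro p; rewrite Et; auto|]. apply inf_bump.
Qed.


Lemma nonempty_of_RS k (F : family P0 P1 C) : RSge (ord_of_nat k) F -> fam_nonempty F.
Proof.
  revert F. induction k as [|k IH]; intros F H; simpl in *; auto.
  destruct H as [[_ Hinf]|[phi [_ [_ HR]]]].
  - apply NNPP. intro Hne. apply Hinf. exists []. intros T HT. exfalso. apply Hne. exists T; auto.
  - destruct (IH _ (HR 0)) as [T [HT _]]. exists T; auto.
Qed.

Lemma PH L (f : nat -> nat) : (forall n, f n < L) -> exists n m, n < m /\ f n = f m.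
Proof.
  revert f. induction L as [|L IH]; intros f Hf.
  - specialize (Hf 0). lia.
  - destruct (classic (exists n, f n = L)) as [[n Hn]|Hno].
    + destruct (classic (exists m, n < m /\ f m = L)) as [[m [Hm Hfm]]|Hno2].
      * exists n, m. split; congruence.
      * destruct (IH (fun k => f (S n + k))) as [i [j [Hij E]]].
        { intro k. specialize (Hf (S n + k)). assert (f (S n + k) <> L).
          { intro E. apply Hno2. exists (S n + k). split; [lia|auto]. } lia. }
        exists (S n + i), (S n + j). split; [lia|auto].
    + apply IH. intro n. specialize (Hf n). assert (f n <> L) by (intro E; apply Hno; eauto). lia.
Qed.

Lemma PHrel L (R : nat -> nat -> Prop) : (forall n, exists i, i < L /\ R n i) ->
  exists n m i, n < m /\ R n i /\ R m i.
Proof.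
  intros H. set (f := fun n => proj1_sig (constructive_indefinite_description _ (H n))).
  assert (Hf : forall n, f n < L /\ R n (f n)).
  { intro n. unfold f. destruct (constructive_indefinite_description _ (H n)); simpl; auto. }
  destruct (PH L f) as [n [m [Hnm E]]]; [intro n; apply Hf|].
  exists n, m, (f n). split; auto. split; [apply Hf|]. rewrite E. apply Hf.
Qed.

Lemma finite_notRS (F : family P0 P1 C) : subT F -> fam_finite F -> forall k, ~ RSge (ord_of_nat (S k)) F.
Proof.
  intros Hs [l Hl] k HR. simpl in HR.
  destruct HR as [[_ Hinf]|[phi [Hsen [Hinc HR]]]]; [apply Hinf; exists l; auto|].
  destruct (PHrel (length l) (fun n i => exists T, F T /\ T (phi n) /\
              same_theory T (nth i l (fun _ => False)))) as [n [m [i [Hnm [[T1 [F1 [P1' S1]]] [T2 [F2 [P2 S2]]]]]]]].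
  { intro n. destruct (nonempty_of_RS k _ (HR n)) as [T [HT Hp]].
    destruct (Hl T HT) as [T' [Hin HS]]. destruct (In_nth _ _ (fun _ => False) Hin) as [i [Hi E]].
    exists i. split; auto. exists T. split; auto. split; auto. rewrite <- E in HS. exact HS. }
  destruct (Hs T2 F2) as [M HM].
  apply (Hinc n m); [lia|]. exists M. split.
  - apply (HM (phi n)). apply S2. apply S1. auto.
  - apply (HM (phi m)). auto.
Qed.

Definition pick (G : family P0 P1 C) q (s : list nat) : theory P0 P1 C :=
  match excluded_middle_informative (exists M, G (Th M) /\ good q M /\ sig q M = s) with
  | left H => Th (proj1_sig (constructive_indefinite_description _ H))
  | right _ => fun _ => False
  end.

Lemma lemmaB q G : Inv q G -> (forall M, G (Th M) -> good q M) -> fam_finite G.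
Proof.
  intros HI Hg. exists (map (pick G q) (Sigs q)). intros T HT.
  destruct (G_Th q G T HI HT) as [M [HTM HGM]].
  exists (pick G q (sig q M)). split; [apply in_map; apply sig_in|].
  unfold pick. destruct (excluded_middle_informative _) as [H|H].
  - destruct (constructive_indefinite_description _ H) as [M' [HG' [Hg' Hs']]]; simpl.
    intro phi. rewrite (HTM phi). apply Rel_same. intro Q. apply (sig_Rel q); auto.
  - exfalso. apply H. exists M. auto.
Qed.

Lemma Inv_restrict q G phi : Inv q G -> sentence phi -> Inv (Nat.max q (qd phi)) (restrict G phi).
Proof.
  intros [He [Hs Hc]] Hsen. split; [|split].
  - intros T T' HTT [HG Hp]. split; [apply (He T); auto|apply HTT; auto].
  - intros T [HG _]. apply Hs; auto.
  - intros M N HR [HG Hp]. split.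
    + apply (Hc M N); auto. apply (Rel_mono _ _ _ _ (Nat.max q (qd phi))); auto. lia.
    + destruct Hp as [_ Hm]. split; auto. apply (models_iff M N (Nat.max q (qd phi))); auto. lia.
Qed.

Lemma Inv_TSigma : Inv 0 (TSigma P0 P1 C).
Proof.
  split; [|split].
  - intros T T' H [M HM]. exists M. intro phi. rewrite <- (H phi). apply HM.
  - intros T H; auto.
  - intros M N _ _. exists N. intro; tauto.
Qed.

Lemma not_good q M : ~ good q M -> exists tau, ~ inf M tau /\ AL M [] tau q.
Proof.
  intro Hng. apply NNPP. intro Hno. apply Hng. intros tau Hi Ha. apply Hno. eauto.
Qed.

Lemma claim k : forall q G, Inv q G -> RSge (ord_of_nat (S k)) G -> exists M, G (Th M) /\ S k <= big M.
Proof.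
  induction k as [|k IH]; intros q G HI HR.
  - assert (Hinf : ~ fam_finite G) by (intro Hfin; exact (finite_notRS G (proj1 (proj2 HI)) Hfin 0 HR)).
    destruct (classic (forall M, G (Th M) -> good q M)) as [Hall|Hno].
    + exfalso. apply Hinf. apply (lemmaB q); auto.
    + apply not_all_ex_not in Hno. destruct Hno as [M HM].
      apply imply_to_and in HM. destruct HM as [HGM Hng].
      destruct (not_good q M Hng) as [tau [Hi Ha]].
      destruct (lemmaC q G M tau HI HGM Hi Ha) as [N [HN Hb]]. exists N. split; auto. lia.
  - change (RSge (OS (ord_of_nat (S k))) G) in HR. simpl in HR.
    destruct HR as [[[] _]|[phi [Hsen [Hinc HR]]]].
    assert (Hex : forall n, exists M, restrict G (phi n) (Th M) /\ S k <= big M).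
    { intro n. apply (IH (Nat.max q (qd (phi n)))); [apply Inv_restrict; auto|exact (HR n)]. }
    set (Mf := fun n => proj1_sig (constructive_indefinite_description _ (Hex n))).
    assert (HMf : forall n, restrict G (phi n) (Th (Mf n)) /\ S k <= big (Mf n)).
    { intro n. unfold Mf. destruct (constructive_indefinite_description _ (Hex n)); simpl; auto. }
    destruct (classic (exists n, ~ good q (Mf n))) as [[n Hng]|Hall].
    + destruct (not_good q _ Hng) as [tau [Hi Ha]].
      destruct (HMf n) as [[HG _] Hb].
      destruct (lemmaC q G _ tau HI HG Hi Ha) as [N [HN Hb']]. exists N. split; auto. lia.
    + assert (Hg : forall n, good q (Mf n)) by (intro n; apply NNPP; intro H; apply Hall; eauto).
      destruct (PHrel (length (Sigs q)) (fun n i => nth i (Sigs q) [] = sig q (Mf n)))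
        as [n [m [i [Hnm [E1 E2]]]]].
      { intro n. destruct (In_nth _ _ [] (sig_in q (Mf n))) as [i [Hi E]]. eauto. }
      assert (HS : same_theory (Th (Mf n)) (Th (Mf m))).
      { apply Rel_same. intro Q. apply (sig_Rel q); auto. congruence. }
      exfalso. apply (Hinc n m); [lia|]. exists (Mf m). split.
      * apply HS. apply (HMf n).
      * apply (HMf m).
Qed.

Definition unitS : St := {| carrier := unit; point := tt; interp0 := fun _ => False;
  interp1 := fun _ _ => False; interpc := fun _ => tt |}.

Lemma least (P : nat -> Prop) m : P 0 -> ~ P m -> exists n, P n /\ ~ P (S n).
Proof.
  induction m as [|m IH]; intros H0 Hm; [contradiction|].
  destruct (classic (P m)) as [H|H]; eauto.
Qed.

Lemma finite_main : exists n, RS_eq (ord_of_nat n) (TSigma P0 P1 C).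
Proof.
  assert (Hub : ~ RSge (ord_of_nat (S (length cells))) (TSigma P0 P1 C)).
  { intro H. destruct (claim _ 0 _ Inv_TSigma H) as [M [_ Hb]]. pose proof (big_le M). lia. }
  assert (H0 : RSge (ord_of_nat 0) (TSigma P0 P1 C)).
  { simpl. exists (Th unitS). exists unitS. intro; tauto. }
  destruct (least (fun n => RSge (ord_of_nat n) (TSigma P0 P1 C)) _ H0 Hub) as [n [Hn Hn']].
  exists n. split; auto.
Qed.

End Fin.


Arguments subT {P0 P1 C}. Arguments extF {P0 P1 C}.

Section Inf.
Variables P0 P1 C : Type.
Notation St := (structure P0 P1 C).
Notation Fm := (form P0 P1 C).

Definition fnot (a : Fm) : Fm := fimp a fbot.
Definition fand (a b : Fm) : Fm := fimp (fimp a (fimp b fbot)) fbot.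
Definition ftrue : Fm := fimp fbot fbot.

Lemma sat_agree (phi : Fm) : forall (M : St) v w, (forall x, occurs_free x phi -> v x = w x) ->
  (sat M v phi <-> sat M w phi).
Proof.
  induction phi as [| t1 t2 | p | p t | f1 IH1 f2 IH2 | x f IH]; intros M v w H; simpl in *.
  - tauto.
  - destruct t1, t2; simpl in *; try rewrite (H n) by auto; try rewrite (H n0) by auto; tauto.
  - tauto.
  - destruct t; simpl in *; try rewrite (H n) by auto; tauto.
  - rewrite (IH1 M v w), (IH2 M v w); try tauto; intros; apply H; auto.
  - split; intros Hm m; [rewrite <- (IH M (upd v x m))|rewrite (IH M (upd v x m))]; auto;
      intros y Hy; unfold upd; destruct (Nat.eqb y x) eqn:E; auto;
      apply Nat.eqb_neq in E; apply H; auto.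
Qed.

Lemma models_sat (M : St) phi : sentence phi -> (models M phi <-> sat M (fun _ => point M) phi).
Proof.
  intros Hs. split; [intro H; apply H|]. intros H v. rewrite (sat_agree phi M v (fun _ => point M)); auto.
  intros x Hx. exfalso. apply (Hs x Hx).
Qed.

Section Gen.
Variable B : nat -> Fm.
Hypothesis Bsen : forall j, sentence (B j).

Fixpoint negs N k : Fm :=
  match k with 0 => ftrue | S k' => fand (fnot (B (N + k'))) (negs N k') end.
Definition phik N k : Fm := fand (B (N + k)) (negs N k).

Lemma negs_sen N k : sentence (negs N k).
Proof.
  induction k; intros x H; simpl in H; [tauto|].
  destruct H as [[[H|[]]|[H|[]]]|[]]; [apply (Bsen _ x H)|apply (IHk x H)].
Qed.

Lemma phik_sen N k : sentence (phik N k).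
Proof.
  intros x H; simpl in H. destruct H as [[H|[H|[]]]|[]]; [apply (Bsen _ x H)|apply (negs_sen N k x H)].
Qed.

Lemma sat_negs (M : St) v N k : sat M v (negs N k) <-> forall j, j < k -> ~ sat M v (B (N + j)).
Proof.
  induction k; simpl.
  - split; intros; [lia|auto].
  - rewrite IHk. split.
    + intros H j Hj. apply NNPP. intro Hn. apply H. intros H1 H2.
      destruct (Nat.eq_dec j k); [subst; apply H1; apply NNPP; auto|].
      apply (H2 j); [lia|]. apply NNPP; auto.
    + intros H Hn. apply Hn; [intro Hb; apply (H k); auto|]. intros j Hj. apply H. lia.
Qed.

Lemma models_phik (M : St) N k : models M (phik N k) <->
  models M (B (N + k)) /\ forall j, j < k -> ~ models M (B (N + j)).
Proof.
  rewrite !models_sat by (apply phik_sen || apply Bsen). unfold phik. simpl.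
  rewrite sat_negs. split.
  - intro H. split.
    + apply NNPP. intro Hn. apply H. intro; contradiction.
    + intros j Hj Hb. apply H. intros _ Hng. apply (Hng j Hj). apply models_sat in Hb; auto.
  - intros [H1 H2] H. apply H; auto. intros j Hj Hs. apply (H2 j Hj). apply models_sat; auto.
Qed.

Variable Good : St -> Prop.
Variable Step : nat -> St -> St -> Prop.
Hypothesis Smono : forall N N' M M', N <= N' -> Step N' M M' -> Step N M M'.
Hypothesis Sgood : forall N M M', Step N M M' -> Good M -> Good M'.
Hypothesis Spres : forall N M M' j, Step N M M' -> j < N -> (models M (B j) <-> models M' (B j)).
Hypothesis Sreal : forall N k M, Good M -> exists M', Step N M M' /\ models M' (B (N + k)) /\
  forall j, j < k -> ~ models M' (B (N + j)).
Hypothesis Gex : exists M, Good M.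

Definition KK (G : family P0 P1 C) : Prop :=
  subT G /\ extF G /\ exists N, (exists M, Good M /\ G (Th M)) /\
    (forall M M', Good M -> Step N M M' -> G (Th M) -> G (Th M')).

Lemma KK_RS (a : Ord) : forall G, KK G -> RSge a G.
Proof.
  induction a as [| b IH | I f IH]; intros G [Hs [He [N [[M [HgM HGM]] Hc]]]]; simpl.
  - exists (Th M); auto.
  - right. exists (phik N). split; [apply phik_sen|split].
    + intros n m Hnm [X [H1 H2]]. apply models_phik in H1. apply models_phik in H2.
      destruct (Nat.lt_total n m) as [Hl|[E|Hl]]; [|contradiction|].
      * apply (proj2 H2 n Hl). apply H1.
      * apply (proj2 H1 m Hl). apply H2.
    + intro n. apply IH. split; [|split].
      * intros T [HT _]. apply Hs; auto.
      * intros T T' HTT [HT Hp]. split; [apply (He T); auto|apply HTT; auto].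
      * exists (N + n + 1). split.
        -- destruct (Sreal N n M HgM) as [M' [HS [Hb Hn]]]. exists M'. split; [eauto|].
           split; [apply (Hc M); auto|]. split; [apply phik_sen|]. apply models_phik. auto.
        -- intros M1 M2 Hg1 HS [HG1 [_ Hm1]]. assert (HS' : Step N M1 M2) by (apply (Smono N (N+n+1)); auto; lia).
           split; [apply (Hc M1); auto|]. split; [apply phik_sen|].
           apply models_phik in Hm1. apply models_phik. destruct Hm1 as [Hb Hj]. split.
           ++ apply (proj1 (Spres _ _ _ (N + n) HS ltac:(lia))). auto.
           ++ intros j Hjk Hb2. apply (Hj j Hjk). apply (proj2 (Spres _ _ _ (N + j) HS ltac:(lia))). auto.
  - split; [exists (Th M); auto|]. intro i. apply IH. split; [auto|split; [auto|]]. exists N. split; eauto.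
Qed.

Lemma gen_infty : RS_infty (TSigma P0 P1 C).
Proof.
  intro a. apply KK_RS. split; [intros T H; auto|split; [apply (proj1 (Inv_TSigma P0 P1 C))|]].
  exists 0. split.
  - destruct Gex as [M HM]. exists M. split; auto. exists M. intro; tauto.
  - intros M M' _ _ _. exists M'. intro; tauto.
Qed.
End Gen.

End Inf.

Lemma inj_of_not_fin (X : Type) : ~ fin_type X -> exists e : nat -> X, forall i j, e i = e j -> i = j.
Proof.
  intro Hnf.
  assert (Hfr : forall l : list X, exists x, ~ In x l).
  { intro l. apply NNPP. intro Hno. apply Hnf. exists l. intro x. apply NNPP. intro Hx. apply Hno. eauto. }
  set (fr := fun l => proj1_sig (constructive_indefinite_description _ (Hfr l))).
  assert (Hfr' : forall l, ~ In (fr l) l).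
  { intro l. unfold fr. destruct (constructive_indefinite_description _ (Hfr l)); simpl; auto. }
  set (pre := fix pre n := match n with 0 => [] | S n' => fr (pre n') :: pre n' end).
  exists (fun n => fr (pre n)).
  assert (Hin : forall i j, i < j -> In (fr (pre i)) (pre j)).
  { intros i j. induction j; intros H; [lia|]. simpl.
    destruct (Nat.eq_dec i j); [subst; left; auto|right; apply IHj; lia]. }
  intros i j E. destruct (Nat.lt_total i j) as [H|[H|H]]; auto; exfalso.
  - apply (Hfr' (pre j)). rewrite <- E. apply Hin; auto.
  - apply (Hfr' (pre i)). rewrite E. apply Hin; auto.
Qed.

Section Inst.
Variables P0 P1 C : Type.
Notation St := (structure P0 P1 C).
Notation Fm := (form P0 P1 C).

Definition unitS' : St := {| carrier := unit; point := tt; interp0 := fun _ => False;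
  interp1 := fun _ _ => False; interpc := fun _ => tt |}.

Lemma inf_P0 (e : nat -> P0) : (forall i j, e i = e j -> i = j) -> RS_infty (TSigma P0 P1 C).
Proof.
  intro Hinj.
  set (withP0 := fun (M : St) (I : P0 -> Prop) =>
     {| carrier := carrier M; point := point M; interp0 := I; interp1 := interp1 M; interpc := interpc M |} : St).
  assert (Hm : forall (M : St) p, models M (fp0 p) <-> interp0 M p).
  { intros M p. split; [intro H; apply (H (fun _ => point M))|intros H v; exact H]. }
  apply (gen_infty P0 P1 C (fun j => fp0 (e j))) with (Good := fun _ => True)
    (Step := fun N M M' => exists I, M' = withP0 M I /\
         forall p, (forall j, N <= j -> p <> e j) -> (I p <-> interp0 M p)).
  - intros j x [].
  - intros N N' M M' HN [I [E H]]. exists I. split; auto. intros p Hp. apply H. intros j Hj. apply Hp. lia.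
  - auto.
  - intros N M M' j [I [E H]] Hj. subst M'. rewrite !Hm. simpl. rewrite H; [tauto|].
    intros j' Hj' E. apply Hinj in E. lia.
  - intros N k M _. exists (withP0 M (fun p => p = e (N + k) \/
                 (interp0 M p /\ forall j, j <= k -> p <> e (N + j)))).
    split; [|split].
    + eexists; split; [reflexivity|]. intros p Hp. split; [|intro H; right; split; auto; intros; apply Hp; lia].
      intros [E|[H _]]; auto. exfalso. apply (Hp (N + k)); auto. lia.
    + rewrite Hm. simpl. left; auto.
    + intros j Hj. rewrite Hm. simpl. intros [E|[_ H]].
      * apply Hinj in E. lia.
      * apply (H j); auto. lia.
  - exists unitS'. auto.
Qed.

Lemma inf_P1 (e : nat -> P1) : (forall i j, e i = e j -> i = j) -> RS_infty (TSigma P0 P1 C).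
Proof.
  intro Hinj.
  set (withP1 := fun (M : St) (J : P1 -> carrier M -> Prop) =>
     {| carrier := carrier M; point := point M; interp0 := interp0 M; interp1 := J; interpc := interpc M |} : St).
  set (Bf := fun j => fnot P0 P1 C (fall 0 (fnot P0 P1 C (fp1 (e j) (tvar 0))))).
  assert (Hm : forall (M : St) j, models M (Bf j) <-> exists m, interp1 M (e j) m).
  { intros M j. unfold models, Bf, fnot. simpl. split.
    - intro H. specialize (H (fun _ => point M)). apply NNPP. intro Hn. apply H. intros m Hi. apply Hn. eauto.
    - intros [m Hi] v H. apply (H m). exact Hi. }
  apply (gen_infty P0 P1 C Bf) with (Good := fun _ => True)
    (Step := fun N M M' => exists J, M' = withP1 M J /\
         forall p, (forall j, N <= j -> p <> e j) -> forall m, (J p m <-> interp1 M p m)).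
  - intros j x H. unfold Bf, fnot in H. simpl in H. tauto.
  - intros N N' M M' HN [J [E H]]. exists J. split; auto. intros p Hp. apply H. intros j Hj. apply Hp. lia.
  - auto.
  - intros N M M' j [J [E H]] Hj. subst M'. rewrite !Hm. simpl.
    split; intros [m Hi]; exists m; [rewrite H|rewrite <- H]; auto;
      intros j' Hj' E; apply Hinj in E; lia.
  - intros N k M _. exists (withP1 M (fun p m => p = e (N + k) \/
                 (interp1 M p m /\ forall j, j <= k -> p <> e (N + j)))).
    split; [|split].
    + eexists; split; [reflexivity|]. intros p Hp m. split; [|intro H; right; split; auto; intros; apply Hp; lia].
      intros [E|[H _]]; auto. exfalso. apply (Hp (N + k)); auto. lia.
    + rewrite Hm. simpl. exists (point M). left; auto.
    + intros j Hj. rewrite Hm. simpl. intros [m [E|[_ H]]].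
      * apply Hinj in E. lia.
      * apply (H j); auto. lia.
  - exists unitS'. auto.
Qed.

Definition boolS : St := {| carrier := bool; point := true; interp0 := fun _ => False;
  interp1 := fun _ _ => False; interpc := fun _ => true |}.

Lemma inf_C (e : nat -> C) : (forall i j, e i = e j -> i = j) -> RS_infty (TSigma P0 P1 C).
Proof.
  intro Hinj.
  set (ea := fun j => e (2 * j)). set (eb := fun j => e (2 * j + 1)).
  assert (Haa : forall i j, ea i = ea j -> i = j) by (intros i j E; apply Hinj in E; lia).
  assert (Hbb : forall i j, eb i = eb j -> i = j) by (intros i j E; apply Hinj in E; lia).
  assert (Hab : forall i j, ea i <> eb j) by (intros i j E; apply Hinj in E; lia).
  set (withC := fun (M : St) (K : C -> carrier M) =>
     {| carrier := carrier M; point := point M; interp0 := interp0 M; interp1 := interp1 M; interpc := K |} : St).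
  set (Bf := fun j => feq (P0 := P0) (P1 := P1) (tconst (ea j)) (tconst (eb j))).
  assert (Hm : forall (M : St) j, models M (Bf j) <-> interpc M (ea j) = interpc M (eb j)).
  { intros M j. unfold models, Bf. simpl. split; [intro H; apply (H (fun _ => point M))|intros H v; exact H]. }
  apply (gen_infty P0 P1 C Bf) with (Good := fun M => exists x0 x1 : carrier M, x0 <> x1)
    (Step := fun N M M' => exists K, M' = withC M K /\
         forall c, (forall j, N <= j -> c <> ea j /\ c <> eb j) -> K c = interpc M c).
  - intros j x H. simpl in H. tauto.
  - intros N N' M M' HN [K [E H]]. exists K. split; auto. intros c Hc. apply H. intros j Hj. apply Hc. lia.
  - intros N M M' [K [E _]] H. subst. exact H.
  - intros N M M' j [K [E H]] Hj. subst M'. rewrite !Hm. simpl.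
    rewrite (H (ea j)), (H (eb j)); [tauto| |];
      intros j' Hj'; split; intro E; try (apply Haa in E; lia); try (apply Hbb in E; lia);
      try (symmetry in E; apply (Hab _ _ E)); apply (Hab _ _ E).
  - intros N k M [x0 [x1 Hx]].
    set (K := fun c => if excluded_middle_informative (c = ea (N + k) \/ c = eb (N + k)) then x0
           else if excluded_middle_informative (exists j, j < k /\ c = ea (N + j)) then x0
           else if excluded_middle_informative (exists j, j < k /\ c = eb (N + j)) then x1
           else interpc M c).
    exists (withC M K). split; [|split].
    + eexists; split; [reflexivity|]. intros c Hc. unfold K.
      destruct (excluded_middle_informative _) as [[E|E]|_];
        [exfalso; specialize (Hc (N + k) ltac:(lia)); tauto|exfalso; specialize (Hc (N + k) ltac:(lia)); tauto|].
      destruct (excluded_middle_informative _) as [[j [_ E]]|_];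
        [exfalso; specialize (Hc (N + j) ltac:(lia)); tauto|].
      destruct (excluded_middle_informative _) as [[j [_ E]]|_];
        [exfalso; specialize (Hc (N + j) ltac:(lia)); tauto|]. auto.
    + rewrite Hm. simpl. unfold K.
      destruct (excluded_middle_informative (ea (N + k) = ea (N + k) \/ ea (N + k) = eb (N + k))) as [_|Hn];
        [|exfalso; tauto].
      destruct (excluded_middle_informative (eb (N + k) = ea (N + k) \/ eb (N + k) = eb (N + k))) as [_|Hn];
        [|exfalso; tauto]. auto.
    + intros j Hj. rewrite Hm. simpl. unfold K.
      destruct (excluded_middle_informative (ea (N + j) = ea (N + k) \/ ea (N + j) = eb (N + k))) as [[E|E]|_];
        [apply Haa in E; lia|exfalso; apply (Hab _ _ E)|].
      destruct (excluded_middle_informative (exists j0, j0 < k /\ ea (N + j) = ea (N + j0))) as [_|Hn];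
        [|exfalso; apply Hn; exists j; auto].
      destruct (excluded_middle_informative (eb (N + j) = ea (N + k) \/ eb (N + j) = eb (N + k))) as [[E|E]|_];
        [exfalso; apply (Hab _ _ (eq_sym E))|apply Hbb in E; lia|].
      destruct (excluded_middle_informative (exists j0, j0 < k /\ eb (N + j) = ea (N + j0))) as [[j0 [_ E]]|_];
        [exfalso; apply (Hab _ _ (eq_sym E))|].
      destruct (excluded_middle_informative (exists j0, j0 < k /\ eb (N + j) = eb (N + j0))) as [_|Hn];
        [|exfalso; apply Hn; exists j; auto]. auto.
  - exists boolS. exists true, false. discriminate.
Qed.

End Inst.


Theorem proposition2p5 (P0 P1 C : Type) :
  ((fin_type P0 /\ fin_type P1 /\ fin_type C) ->
     exists n : nat, RS_eq (ord_of_nat n) (TSigma P0 P1 C)) /\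
  (~ (fin_type P0 /\ fin_type P1 /\ fin_type C) ->
     RS_infty (TSigma P0 P1 C)).
Proof.
  split.
  - intros [[l0 H0] [[l1 H1] [lc Hc]]]. eapply finite_main; eauto.
  - intro Hn. destruct (classic (fin_type P0)) as [F0|F0].
    + destruct (classic (fin_type P1)) as [F1|F1].
      * destruct (classic (fin_type C)) as [FC|FC]; [exfalso; tauto|].
        destruct (inj_of_not_fin C FC) as [e He]. exact (inf_C P0 P1 C e He).
      * destruct (inj_of_not_fin P1 F1) as [e He]. exact (inf_P1 P0 P1 C e He).
    + destruct (inj_of_not_fin P0 F0) as [e He]. exact (inf_P0 P0 P1 C e He).
Qed.

Print Assumptions proposition2p5.
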